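(* Let $M\in\mathrm{SL}(2,\mathbb{Z})$ and $n\in\mathbb{N}$. Then the reduction of $M$ mod $n$ is conjugate to its inverse within $\mathrm{GL}(2,\mathbb{Z}/n\mathbb{Z})$; hence the action of $M$ (mod $1$) on the lattice $L_n=\{x\in\mathbb{T}^2: nx\equiv0 \bmod 1\}$ of $n$-division points of the torus $\mathbb{T}^2=\mathbb{R}^2/\mathbb{Z}^2$ is reversible for all $n\in\mathbb{N}$. Moreover, if $\mathrm{mgcd}(M)=r\neq0$, then for every $n\in\mathbb{N}$ the reduction of $M$ mod $n$ possesses an involutory reversor, i.e. there is $R\in\mathrm{GL}(2,\mathbb{Z}/n\mathbb{Z})$ with $R^2=\mathbb{1}$ and $RMR^{-1}=M^{-1}$ over $\mathbb{Z}/n\mathbb{Z}$.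
   Context: For $M=\begin{pmatrix}a&b\\c&d\end{pmatrix}$, $\mathrm{mgcd}(M)=\gcd(b,c,d-a)$. An action is called reversible if it is conjugate to its inverse within the relevant group (here via an element of $\mathrm{GL}(2,\mathbb{Z}/n\mathbb{Z})$); a conjugating element is a reversor. *)

(* Defs.v *)
From mathcomp Require Import all_boot all_order all_algebra.
Set Implicit Arguments. Unset Strict Implicit. Unset Printing Implicit Defensive.
Import GRing.Theory Num.Theory.
Local Open Scope ring_scope.

Definition mgcd (M : 'M[int]_2) : int :=
  gcdz (gcdz (M ord0 ord_max) (M ord_max ord0)) (M ord_max ord_max - M ord0 ord0).

Definition red_mx (n : nat) (M : 'M[int]_2) : 'M['Z_n]_2 :=
  map_mx (fun z : int => (z%:~R : 'Z_n)) M.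

(* Main.v *)
Require Import Defs.
From mathcomp Require Import all_boot all_order all_algebra.
From mathcomp Require Import ring.
Import GRing.Theory Num.Theory.
Local Open Scope ring_scope.

Definition mx2 {K : Type} (a b c d : K) : 'M[K]_2 :=
  \matrix_(i < 2, j < 2) if (i:nat) == 0%N then (if (j:nat)==0%N then a else b)
                         else (if (j:nat)==0%N then c else d).

Lemma ord2P (i : 'I_2) : i = ord0 \/ i = ord_max.
Proof. case: i => [[|[|k]] H]; [left|right|by []]; exact/val_inj. Qed.

Lemma mx2_mul (K : pzRingType) (a b c d a' b' c' d' : K) :
  mx2 a b c d *m mx2 a' b' c' d' =
  mx2 (a*a' + b*c') (a*b' + b*d') (c*a' + d*c') (c*b'+d*d').
Proof.
apply/matrixP=> i j; rewrite !mxE !big_ord_recl big_ord0 !mxE /=.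
by case: (ord2P i) => ->; case: (ord2P j) => ->; rewrite /= addr0.
Qed.

Lemma mx2_1 (K : pzRingType) : (1%:M : 'M[K]_2) = mx2 1 0 0 1.
Proof.
apply/matrixP=> i j; rewrite !mxE.
by case: (ord2P i) => ->; case: (ord2P j) => ->.
Qed.

Lemma key (K : comUnitRingType) (a r b c e x y : K) :
  (c*x^+2 + e*x*y - b*y^+2) \is a GRing.unit ->
  a*(a+r*e) - (r*b)*(r*c) = 1 ->
  exists2 R : 'M[K]_2, R \in unitmx &
    R *m R = 1%:M /\
    R *m mx2 a (r*b) (r*c) (a+r*e) *m invmx R = invmx (mx2 a (r*b) (r*c) (a+r*e)).
Proof.
set D := _ - _ => uD hdet.
pose Di := D^-1.
have hD : Di * D = 1 by rewrite /Di mulVr.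
pose p0 := c*x^+2 + b*y^+2.
pose q0 := e*x^+2 - 2*b*x*y.
pose s0 := 2*c*x*y + e*y^+2.
set M := mx2 _ _ _ _.
pose R := mx2 (Di * p0) (Di * q0) (Di * s0) (Di * (- p0)).
have hRR : R *m R = 1%:M.
  rewrite mx2_mul mx2_1; congr mx2.
  - transitivity ((Di*D)^+2); last by rewrite hD expr1n.
    by rewrite /p0 /q0 /s0 /D; ring.
  - transitivity ((Di*D)^+2 * 0); last by rewrite mulr0.
    by rewrite /p0 /q0 /s0 /D; ring.
  - transitivity ((Di*D)^+2 * 0); last by rewrite mulr0.
    by rewrite /p0 /q0 /s0 /D; ring.
  - transitivity ((Di*D)^+2); last by rewrite hD expr1n.
    by rewrite /p0 /q0 /s0 /D; ring.
have hRM : R *m M *m R *m M = 1%:M.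
  rewrite /M !mx2_mul mx2_1; congr mx2.
  - transitivity ((Di*D)^+2 * (a*(a+r*e) - (r*b)*(r*c))); last by rewrite hD hdet expr1n mulr1.
    by rewrite /p0 /q0 /s0 /D; ring.
  - transitivity ((Di*D)^+2 * (a*(a+r*e) - (r*b)*(r*c)) * 0); last by rewrite mulr0.
    by rewrite /p0 /q0 /s0 /D; ring.
  - transitivity ((Di*D)^+2 * (a*(a+r*e) - (r*b)*(r*c)) * 0); last by rewrite mulr0.
    by rewrite /p0 /q0 /s0 /D; ring.
  - transitivity ((Di*D)^+2 * (a*(a+r*e) - (r*b)*(r*c))); last by rewrite hD hdet expr1n mulr1.
    by rewrite /p0 /q0 /s0 /D; ring.
have [uR _] := mulmx1_unit hRR.
have [_ uM] := mulmx1_unit hRM.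
have iR : invmx R = R.
  by rewrite -[invmx R]mulmx1 -hRR mulmxA mulVmx // mul1mx.
exists R => //; split => //.
rewrite iR -[invmx M]mul1mx -hRM -!mulmxA mulmxV // mulmx1 //.
Qed.

Lemma dvd_prodP (p : nat) (P : pred nat) (s : seq nat) : prime p -> all prime s ->
  (p %| \prod_(q <- s | P q) q)%N = (p \in s) && P p.
Proof.
move=> pp; elim: s => [|q s IH] /=; first by rewrite big_nil dvdn1; case: eqP pp => // ->.
case/andP=> pq /IH {}IH; rewrite big_cons in_cons.
case: (eqVneq p q) => [epq|npq] /=.
  subst q; rewrite ?eqxx /=.
  by case Pq: (P p) => /=; rewrite ?Euclid_dvdM ?dvdnn // IH Pq andbF.
case: (P q) => //; rewrite Euclid_dvdM // dvdn_prime2 // (negbTE npq) //.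
Qed.


Lemma dvdz_primeM (p : nat) (u v : int) : prime p ->
  (p%:Z %| u*v)%Z = (p%:Z %| u)%Z || (p%:Z %| v)%Z.
Proof. by move=> pp; rewrite !dvdzE abszM Euclid_dvdM. Qed.

Lemma prim_rep (n : nat) (al be ga : int) : (0 < n)%N ->
 (forall p, prime p -> (p %| n)%N ->
    ~~ [&& (p%:Z %| al)%Z, (p%:Z %| be)%Z & (p%:Z %| ga)%Z]) ->
 exists x y : int, coprime n `|(al*x^+2 + be*x*y + ga*y^+2)%R|%N.
Proof.
move=> n0 hprim.
pose X := \prod_(q <- primes n | (q%:Z %| al)%Z && ~~ (q%:Z %| ga)%Z) q.
pose Y := \prod_(q <- primes n | ~~ (q%:Z %| al)%Z) q.
exists X%:Z, Y%:Z.
set h := _ + _.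
have allp : all prime (primes n) by apply/allP => q; rewrite mem_primes => /andP[].
rewrite /coprime; case: (ltngtP (gcdn n `|h|) 1) => /= [|g1|//].
  by rewrite ltnNge gcdn_gt0 n0.
have pp := pdiv_prime g1.
set p := pdiv _ in pp.
have pn : (p %| n)%N by apply: dvdn_trans (pdiv_dvd _) (dvdn_gcdl _ _).
have ph : (p%:Z %| h)%Z by rewrite dvdzE /=; apply: dvdn_trans (pdiv_dvd _) (dvdn_gcdr _ _).
have pin : p \in primes n by rewrite mem_primes pp n0 pn.
have dX : (p%:Z %| X%:Z)%Z = (p%:Z %| al)%Z && ~~ (p%:Z %| ga)%Z.
  by rewrite dvdzE /= dvd_prodP // pin.
have dY : (p%:Z %| Y%:Z)%Z = ~~ (p%:Z %| al)%Z.
  by rewrite dvdzE /= dvd_prodP // pin.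
have := hprim p pp pn.
case pal: (p%:Z %| al)%Z; case pga: (p%:Z %| ga)%Z => /=; rewrite ?pal ?pga /= in dX dY.
- move=> pbe.
  have : (p%:Z %| h - (al * X%:Z^+2 + ga * Y%:Z^+2))%Z.
    by rewrite rpredB // rpredD // dvdz_mulr.
  have -> : h - (al * X%:Z^+2 + ga * Y%:Z^+2) = be * X%:Z * Y%:Z by rewrite /h; ring.
  by rewrite !dvdz_primeM // dX dY; rewrite andbT in pbe; rewrite (negbTE pbe).
- move=> _.
  have : (p%:Z %| h - (al * X%:Z^+2 + be * X%:Z * Y%:Z))%Z.
    by rewrite rpredB // rpredD //; [apply: dvdz_mulr; rewrite pal | apply/dvdz_mulr/dvdz_mull; rewrite dX].
  have -> : h - (al * X%:Z^+2 + be * X%:Z * Y%:Z) = ga * (Y%:Z * Y%:Z) by rewrite /h; ring.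
  by rewrite !dvdz_primeM // dY pga.
- move=> _.
  have : (p%:Z %| h - (be * X%:Z * Y%:Z + ga * Y%:Z^+2))%Z.
    by rewrite rpredB // rpredD //; [apply: dvdz_mull; rewrite dY | apply: dvdz_mull; rewrite expr2; apply: dvdz_mulr; rewrite dY].
  have -> : h - (be * X%:Z * Y%:Z + ga * Y%:Z^+2) = al * (X%:Z * X%:Z) by rewrite /h; ring.
  by rewrite !dvdz_primeM // dX pal.
- move=> _.
  have : (p%:Z %| h - (be * X%:Z * Y%:Z + ga * Y%:Z^+2))%Z.
    by rewrite rpredB // rpredD //; [apply: dvdz_mull; rewrite dY | apply: dvdz_mull; rewrite expr2; apply: dvdz_mulr; rewrite dY].
  have -> : h - (be * X%:Z * Y%:Z + ga * Y%:Z^+2) = al * (X%:Z * X%:Z) by rewrite /h; ring.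
  by rewrite !dvdz_primeM // dX pal.
Qed.
Lemma det2 (R : comPzRingType) (A : 'M[R]_2) :
  \det A = A ord0 ord0 * A ord_max ord_max - A ord0 ord_max * A ord_max ord0.
Proof.
rewrite (expand_det_row _ ord0) !big_ord_recl big_ord0 /cofactor !det_mx11 !mxE /=.
rewrite addr0 !expr0 !mul1r.
have -> : lift ord0 ord0 = ord_max :> 'I_2 by apply: val_inj.
have -> : lift ord_max ord0 = ord0 :> 'I_2 by apply: val_inj.
by rewrite /= expr1 mulN1r mulrN.
Qed.

Lemma unit_intr (n : nat) (z : int) : (1 < n)%N -> coprime n `|z|%N ->
  (z%:~R : 'Z_n) \is a GRing.unit.
Proof.
move=> n1; case: z => k /= hc.
  by have -> : ((Posz k)%:~R : 'Z_n) = k%:R by []; rewrite unitZpE.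
rewrite NegzE mulrNz unitrN.
by have -> : (1 *~ (k.+1)%:Z : 'Z_n) = k.+1%:R by []; rewrite unitZpE.
Qed.

Lemma main_aux (M : 'M[int]_2) (n : nat) (a r b c e x y : int) : (1 < n)%N ->
  M ord0 ord0 = a -> M ord0 ord_max = r*b -> M ord_max ord0 = r*c ->
  M ord_max ord_max = a + r*e ->
  \det M = 1 -> coprime n `|(c*x^+2 + e*x*y - b*y^+2)%R|%N ->
  exists2 R : 'M['Z_n]_2, R \in unitmx &
    R *m R = 1%:M /\ R *m red_mx n M *m invmx R = invmx (red_mx n M).
Proof.
move=> n1 h00 h01 h10 h11 hdet hc.
have -> : red_mx n M = mx2 (a%:~R) (r%:~R * b%:~R) (r%:~R * c%:~R) (a%:~R + r%:~R * e%:~R).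
  apply/matrixP=> i j; rewrite !mxE.
  by case: (ord2P i) => ->; case: (ord2P j) => -> /=;
     rewrite ?h00 ?h01 ?h10 ?h11 ?rmorphD ?rmorphM.
apply: (@key _ _ _ _ _ _ (x%:~R) (y%:~R)).
  have -> : (c%:~R * (x%:~R) ^+ 2 + e%:~R * x%:~R * y%:~R - b%:~R * (y%:~R) ^+ 2 : 'Z_n)
       = (c*x^+2 + e*x*y - b*y^+2)%:~R.
    by rewrite !(rmorphB, rmorphD, rmorphM, rmorphXn).
  exact: unit_intr.
rewrite det2 h00 h01 h10 h11 in hdet.
have := congr1 (fun z : int => (z%:~R : 'Z_n)) hdet.
by rewrite /= !(rmorphB, rmorphD, rmorphM, rmorph1).
Qed.

Theorem theorem4p2 (M : 'M[int]_2) (n : nat) :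
  \det M = 1 -> (1 < n)%N ->
  (exists2 R : 'M['Z_n]_2, R \in unitmx &
     R *m red_mx n M *m invmx R = invmx (red_mx n M))
  /\
  (mgcd M != 0 ->
   exists2 R : 'M['Z_n]_2, R \in unitmx &
     R *m R = 1%:M /\ R *m red_mx n M *m invmx R = invmx (red_mx n M)).
Proof.
move=> hdet n1.
suff [R uR [RR hR]] : exists2 R : 'M['Z_n]_2, R \in unitmx &
     R *m R = 1%:M /\ R *m red_mx n M *m invmx R = invmx (red_mx n M).
  by split; [exists R | move=> _; exists R].
case: (eqVneq (mgcd M) 0) => [r0|rn0].
  move: r0; rewrite /mgcd => /eqP; rewrite !gcdz_eq0 => /andP[/andP[/eqP b0 /eqP c0] /eqP da].
  apply: (@main_aux M n (M ord0 ord0) 0 0 1 0 1 0) => //.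
  all: rewrite ?b0 ?c0 ?mulr0 ?mul0r ?addr0 //.
  - by apply: subr0_eq.
  - by rewrite mul1r expr1n coprimen1.
set r := mgcd M in rn0.
have rb : (r %| M ord0 ord_max)%Z by apply: dvdz_trans (dvdz_gcdl _ _) (dvdz_gcdl _ _).
have rc : (r %| M ord_max ord0)%Z by apply: dvdz_trans (dvdz_gcdl _ _) (dvdz_gcdr _ _).
have re : (r %| M ord_max ord_max - M ord0 ord0)%Z by apply: dvdz_gcdr.
set b' := ((M ord0 ord_max) %/ r)%Z.
set c' := ((M ord_max ord0) %/ r)%Z.
set e' := ((M ord_max ord_max - M ord0 ord0) %/ r)%Z.
have hb : M ord0 ord_max = r * b' by rewrite mulrC divzK.
have hc : M ord_max ord0 = r * c' by rewrite mulrC divzK.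
have he : M ord_max ord_max = M ord0 ord0 + r * e'.
  by rewrite mulrC divzK // addrC subrK.
have hprim : forall p, prime p -> (p %| n)%N ->
    ~~ [&& (p%:Z %| c')%Z, (p%:Z %| e')%Z & (p%:Z %| - b')%Z].
  move=> p pp pn; apply/negP => /and3P[pc pe]; rewrite rpredN => pb.
  have : ((p%:Z * r) %| r)%Z.
    have hr : r = gcdz (gcdz (M ord0 ord_max) (M ord_max ord0)) (M ord_max ord_max - M ord0 ord0) by [].
    rewrite [X in (_ %| X)%Z]hr !dvdz_gcd hb hc.
    have -> : M ord_max ord_max - M ord0 ord0 = r * e' by rewrite he addrC addKr.
    by rewrite ![r * _]mulrC !dvdz_mul2r // pb pc pe.
  rewrite -[X in (_ %| X)%Z](mul1r r) dvdz_mul2r // dvdzE /= dvdn1 => /eqP p1.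
  by rewrite p1 in pp.
have [x [y cop]] := @prim_rep n c' e' (- b') (ltnW n1) hprim.
apply: (@main_aux M n (M ord0 ord0) r b' c' e' x y) => //.
by rewrite mulNr in cop.
Qed.
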